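(* Let $(X,d_X)$ be a complete metric space. Suppose that $\mathfrak{A}=\{A(t)\}_{t\in\mathbb{R}}$ and $\mathfrak{A}_\infty=\{A_\infty(t)\}_{t\in\mathbb{R}}$ are pullback attractors of processes $U$ and $U_\infty$ on $X$, respectively. Assume that (i) $\mathfrak{A}$ is backwards bounded, i.e. there is a bounded set $B\subset X$ with $\bigcup_{t\leq0}A(t)\subset B$; (ii) $$\sup_{x\in B,\ \tau\in\mathbb{R}^+} d_X\big(U(t,t-\tau,x),U_\infty(t,t-\tau,x)\big)\to0\quad\text{as } t\to-\infty.$$ Then $\lim_{t\to-\infty}\operatorname{dist}\big(A(t),A_\infty(t)\big)=0$. If moreover $\bigcup_{t\leq0}A_\infty(t)\subset B$, then $\lim_{t\to-\infty}\operatorname{dist}_H\big(A(t),A_\infty(t)\big)=0$.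
   Context: A process on $X$ is a map $U:\{(t,\tau)\in\mathbb{R}^2:t\geq\tau\}\times X\to X$ with $U(\tau,\tau,x)=x$ and $U(t,s,U(s,\tau,x))=U(t,\tau,x)$ for all $t\geq s\geq\tau$, $x\in X$ (no continuity is assumed). A pullback attractor of $U$ is a family $\mathfrak{A}=\{A(t)\}_{t\in\mathbb{R}}$ of nonempty compact subsets of $X$ which is invariant ($U(t,\tau,A(\tau))=A(t)$ for all $t\geq\tau$), pullback attracts every nonempty bounded set $D\subset X$ (i.e. $\lim_{s\to\infty}\operatorname{dist}(U(t,t-s,D),A(t))=0$ for every $t\in\mathbb{R}$), and is minimal among families with these properties. Here $\operatorname{dist}(A,B)=\sup_{a\in A}\inf_{b\in B}d_X(a,b)$ is the Hausdorff semi-metric and $\operatorname{dist}_H(A,B)=\max\{\operatorname{dist}(A,B),\operatorname{dist}(B,A)\}$ the Hausdorff metric. *)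

(* Defs.v *)
From HB Require Import structures.
From mathcomp Require Import all_boot all_order all_algebra.
From mathcomp Require Import all_classical all_reals all_analysis.
Set Implicit Arguments. Unset Strict Implicit. Unset Printing Implicit Defensive.
Import Order.TTheory GRing.Theory Num.Theory.
Import numFieldNormedType.Exports.
Local Open Scope classical_set_scope.
Local Open Scope ring_scope.

Definition complete_space {R : realType} (X : metricType R) : Prop :=
  forall F : set_system X, ProperFilter F -> cauchy F -> exists x : X, F --> x.

Definition mbounded {R : realType} {X : metricType R} (D : set X) : Prop :=
  exists (x0 : X) (r : R), forall x, D x -> mdist x0 x <= r.

Definition hsdist {R : realType} {X : metricType R} (A B : set X) : \bar R :=
  ereal_sup [set ereal_inf [set (mdist a b)%:E | b in B] | a in A].

Definition hdist {R : realType} {X : metricType R} (A B : set X) : \bar R :=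
  maxe (hsdist A B) (hsdist B A).

(* a process: U t tau x, meaningful for t >= tau *)
Definition is_process {R : realType} {X : metricType R}
  (U : R -> R -> X -> X) : Prop :=
  (forall tau x, U tau tau x = x) /\
  (forall t s tau x, tau <= s -> s <= t -> U t s (U s tau x) = U t tau x).

Definition pullback_attracting_family {R : realType} {X : metricType R}
  (U : R -> R -> X -> X) (A : R -> set X) : Prop :=
  (forall t, A t !=set0 /\ compact (A t)) /\
  (forall t tau, tau <= t -> U t tau @` A tau = A t) /\
  (forall D : set X, D !=set0 -> mbounded D -> forall t : R,
     hsdist (U t (t - s) @` D) (A t) @[s --> +oo] --> 0%E).

Definition pullback_attractor {R : realType} {X : metricType R}
  (U : R -> R -> X -> X) (A : R -> set X) : Prop :=
  pullback_attracting_family U A /\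
  (forall C : R -> set X, pullback_attracting_family U C ->
     forall t, A t `<=` C t).

(* Main.v *)
Require Import Defs.
From HB Require Import structures.
From mathcomp Require Import all_boot all_order all_algebra.
From mathcomp Require Import all_classical all_reals all_analysis.
From mathcomp Require Import lra.
Import Order.TTheory GRing.Theory Num.Theory.
Import numFieldNormedType.Exports.
Local Open Scope classical_set_scope.
Local Open Scope ring_scope.

Section Aux.
Context (R : realType) (X : metricType R).

Lemma key_step (P Q : R -> R -> X -> X) (Ap Aq : R -> set X) (B : set X)
  (t tau e : R) :
  P t (t - tau) @` Ap (t - tau) = Ap t ->
  Ap (t - tau) `<=` B ->
  (hsdist (Q t (t - tau)%R @` B) (Aq t) <= e%:E)%E ->
  (forall x, B x -> mdist (P t (t - tau) x) (Q t (t - tau) x) <= e) ->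
  (hsdist (Ap t) (Aq t) <= (e + e)%:E)%E.
Proof.
move=> inv sub hQ hd.
apply: ge_ereal_sup => _ [a Apa <-].
rewrite -inv in Apa; case: Apa => x Apx <-{a}.
set c := Q t (t - tau) x.
have h1 : (ereal_inf [set (mdist c b)%:E | b in Aq t] <= e%:E)%E.
  apply: le_trans hQ; apply: ereal_sup_ubound.
  by exists c => //; exists x => //; apply: sub.
have h2 : (ereal_inf [set (mdist (P t (t - tau)%R x) b)%:E | b in Aq t]
          - (mdist (P t (t - tau)%R x) c)%:E
          <= ereal_inf [set (mdist c b)%:E | b in Aq t])%E.
  apply: le_ereal_inf_tmp => _ [b Aqb <-].
  rewrite leeBlDr //.
  apply: le_trans (ereal_inf_lbound _) _; first by exists b.
  by rewrite -EFinD lee_fin [X in _ <= X]addrC; apply: metric_triangle.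
rewrite leeBlDr // in h2.
apply: le_trans h2 _; rewrite EFinD; apply: leeD => //.
rewrite lee_fin; apply: hd; exact: sub.
Qed.

Lemma hsdist_ge0 (A1 A2 : set X) : A1 !=set0 -> (0 <= hsdist A1 A2)%E.
Proof.
move=> [a A1a]; apply: le_trans (ereal_sup_ubound _); last by exists a.
apply: le_ereal_inf_tmp => _ [b _ <-]; rewrite lee_fin; exact: mdist_ge0.
Qed.

Lemma cvg0_eps {T} {F : set_system T} {FF : Filter F} (h : T -> \bar R) :
  (forall t, (0 <= h t)%E) ->
  (forall e : R, 0 < e -> \forall t \near F, (h t <= e%:E)%E) ->
  h @ F --> 0%E.
Proof.
move=> h0 he; apply/fine_cvgP; split.
  apply: filterS (he 1 ltr01) => t ht.
  by rewrite ge0_fin_numE // (le_lt_trans ht) // ltry.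
apply/cvgrPdist_le => e e0; apply: filterS (he e e0) => t ht /=.
rewrite sub0r normrN; move: (h0 t) ht; case: (h t) => [r| |] //=.
by rewrite !lee_fin => r0 re; rewrite ger0_norm.
Qed.

Lemma cvg0_eps_inv {T} {F : set_system T} {h : T -> \bar R} {FF : Filter F} :
  h @ F --> 0%E ->
  (forall e : R, 0 < e -> \forall t \near F, (h t <= e%:E)%E).
Proof.
move=> /fine_cvgP [hfin /cvgrPdist_le hc] e e0.
apply: filterS2 hfin (hc e e0) => t ht /=.
rewrite sub0r normrN => he; rewrite -(fineK ht) lee_fin.
exact: le_trans (ler_norm _) he.
Qed.

Lemma half_main (P Q : R -> R -> X -> X) (Ap Aq : R -> set X) (B : set X) :
  B !=set0 ->
  (forall t, Ap t !=set0) ->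
  (forall t tau, tau <= t -> P t tau @` Ap tau = Ap t) ->
  (forall t, t <= 0 -> Ap t `<=` B) ->
  (forall t, hsdist (Q t (t - s) @` B) (Aq t) @[s --> +oo] --> 0%E) ->
  (forall e : R, 0 < e -> \forall t \near -oo, forall x tau, B x -> 0 <= tau ->
      mdist (P t (t - tau) x) (Q t (t - tau) x) <= e) ->
  hsdist (Ap t) (Aq t) @[t --> -oo] --> 0%E.
Proof.
move=> B0 Ap0 inv sub att hd.
apply: cvg0_eps => [t|e e0]; first exact: hsdist_ge0.
have e20 : 0 < e / 2 by rewrite divr_gt0.
near=> t.
have tle0 : t <= 0 by near: t; exact: (nbhs_ninfty_le (num_real (0:R))).
have htd : forall x tau, B x -> 0 <= tau ->
    mdist (P t (t - tau) x) (Q t (t - tau) x) <= e / 2.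
  by near: t; exact: hd.
have [tau [tau0 htau]] : exists tau, 0 <= tau /\
    (hsdist (Q t (t - tau)%R @` B) (Aq t) <= (e / 2)%:E)%E.
  have H := @cvg0_eps_inv _ _ _ (@proper_pinfty_nbhs R) (att t) _ e20.
  have H2 := nbhs_pinfty_ge (num_real (0:R)).
  have [s [Hs1 Hs2]] := filter_ex (filterI H2 H).
  by exists s.
have -> : e = e / 2 + e / 2 by rewrite -splitr.
apply: (@key_step P Q Ap Aq B t tau (e / 2)) => //.
- by apply: inv; lra.
- by apply: sub; lra.
- by move=> x Bx; apply: htd.
Unshelve. all: by end_near.
Qed.

End Aux.

Theorem proposition2p4 (R : realType) (X : metricType R)
  (U Uinf : R -> R -> X -> X) (A Ainf : R -> set X) (B : set X) :
  complete_space X ->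
  is_process U -> is_process Uinf ->
  pullback_attractor U A -> pullback_attractor Uinf Ainf ->
  mbounded B -> (forall t, t <= 0 -> A t `<=` B) ->
  ereal_sup [set r | exists x tau, [/\ B x, 0 <= tau &
             r = (mdist (U t (t - tau) x) (Uinf t (t - tau) x))%:E]] @[t --> -oo] --> 0%E ->
  (hsdist (A t) (Ainf t) @[t --> -oo] --> 0%E) /\
  ((forall t, t <= 0 -> Ainf t `<=` B) ->
     hdist (A t) (Ainf t) @[t --> -oo] --> 0%E).
Proof.
move=> _ _ _ [[hA [invA attA]] _] [[hAi [invAi attAi]] _] bB subA hdel.
have A0 t : A t !=set0 by case: (hA t).
have Ai0 t : Ainf t !=set0 by case: (hAi t).
have B0 : B !=set0.
  by case: (A0 0) => a Aa; exists a; apply: (subA 0).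
have hd : forall e : R, 0 < e -> \forall t \near -oo, forall x tau, B x -> 0 <= tau ->
      mdist (U t (t - tau) x) (Uinf t (t - tau) x) <= e.
  move=> e e0.
  have H := @cvg0_eps_inv _ _ _ _ (@proper_ninfty_nbhs R) hdel _ e0.
  apply: filterS H => t ht x tau Bx tau0.
  rewrite -lee_fin; apply: le_trans ht; apply: ereal_sup_ubound.
  by exists x, tau.
have att1 t : hsdist (Uinf t (t - s) @` B) (Ainf t) @[s --> +oo] --> 0%E.
  by apply: attAi.
have att2 t : hsdist (U t (t - s) @` B) (A t) @[s --> +oo] --> 0%E.
  by apply: attA.
have part1 := @half_main R X U Uinf A Ainf B B0 A0 invA subA att1 hd.
split => // subAi.
have hd' : forall e : R, 0 < e -> \forall t \near -oo, forall x tau, B x -> 0 <= tau ->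
      mdist (Uinf t (t - tau) x) (U t (t - tau) x) <= e.
  move=> e e0; apply: filterS (hd e e0) => t ht x tau Bx tau0.
  by rewrite metric_sym; apply: ht.
have part2 := @half_main R X Uinf U Ainf A B B0 Ai0 invAi subAi att2 hd'.
apply: cvg0_eps => [t|e e0].
  by rewrite /hdist le_max hsdist_ge0.
have H1 := @cvg0_eps_inv _ _ _ _ (@proper_ninfty_nbhs R) part1 _ e0.
have H2 := @cvg0_eps_inv _ _ _ _ (@proper_ninfty_nbhs R) part2 _ e0.
apply: filterS2 H1 H2 => t h1 h2.
by rewrite /hdist ge_max h1 h2.
Qed.
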